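(* The minus operator $-$ of the W3C SPARQL algebra is expressible in the core SPARQL algebra. That is, for all multisets of mappings $\Omega_1,\Omega_2$, the multiset $\Omega_1-\Omega_2$ (with its multiplicities) can be obtained by an expression using only projection, selection, join, union and simple difference.
   Context: Fix pairwise disjoint infinite sets $I$ (IRIs), $L$ (literals) and $V$ (variables), and let $T=I\cup L$. Solution mappings. A mapping is a partial function $\mu:V\to T$ with domain $\operatorname{dom}(\mu)$. Mappings $\mu_1,\mu_2$ are compatible ($\mu_1\sim\mu_2$) if they agree on every variable in $\operatorname{dom}(\mu_1)\cap\operatorname{dom}(\mu_2)$; then $\mu_1\cup\mu_2$ is a mapping. Multisets. A multiset $\Omega$ of mappings assigns multiplicities $\mathrm{card}_\Omega(\mu)\ge0$, and $\operatorname{dom}(\Omega)=\bigcup_{\mu\in\Omega}\operatorname{dom}(\mu)$. Selection formulas. The atomic ones are $(?X=c)$, $(?X=?Y)$ and $\operatorname{bound}(?X)$; they are closed under $\land$, $\lor$ and $\neg$. They are evaluated under a mapping in the three-valued logic $\{\mathit{true},\mathit{false},\mathit{error}\}$: - an equality is $\mathit{error}$ if a mentioned variable is unbound, and otherwise $\mathit{true}$ or $\mathit{false}$ according to equality; - $\operatorname{bound}(?X)$ is $\mathit{true}$ iff $?X$ is bound, and $\mathit{false}$ otherwise; - $\land$ and $\lor$ follow Kleene's strong three-valued logic with $\mathit{error}$ as the unknown value, and $\neg(\mathit{error})=\mathit{error}$. Operations, for multisets $\Omega_1,\Omega_2$. - Projection: $\pi_W$ restricts each mapping to $W$ and sums multiplicities.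 - Selection: $\sigma_F$ keeps the mappings on which $F$ evaluates to $\mathit{true}$. - Join: $\Omega_1\Join\Omega_2$ consists of the unions $\mu_1\cup\mu_2$ of compatible pairs, with multiplicities being sums of products. - Union: $\Omega_1\cup\Omega_2$, with multiplicities added. - Simple difference: $\Omega_1\setminus\Omega_2=\{\mu_1\in\Omega_1\mid\forall\mu_2\in\Omega_2,\ \mu_1\nsim\mu_2\}$, with multiplicities as in $\Omega_1$. - Minus: $\Omega_1-\Omega_2=\{\mu_1\in\Omega_1\mid\forall\mu_2\in\Omega_2,\ \mu_1\nsim\mu_2\lor\operatorname{dom}(\mu_1)\cap\operatorname{dom}(\mu_2)=\emptyset\}$, with multiplicities as in $\Omega_1$. The core SPARQL algebra consists of projection, selection, join, union and simple difference. An operator $O$ is expressible in a language $L$ iff some subset of the operators of $L$ can express the same queries as $O$. *)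

(* Defs.v *)
From mathcomp Require Import all_boot.
From mathcomp Require Import finmap.
Set Implicit Arguments. Unset Strict Implicit. Unset Printing Implicit Defensive.
Local Open Scope fset_scope.
Local Open Scope fmap_scope.

Section SPARQL.
(* V : variables, T = I ∪ L : IRIs and literals (only equality of terms matters). *)
Variables (V T : choiceType).

Definition mapping := {fmap V -> T}.

(* A multiset of mappings: a finite sequence, multiplicities = number of
   occurrences; two multisets are equal iff they are permutations (perm_eq). *)
Definition mset := seq mapping.

Definition compatible (m1 m2 : mapping) : bool :=
  all (fun x => (x \notin domf m2) || (m1.[? x] == m2.[? x])) (domf m1).

Definition mapping_union (m1 m2 : mapping) : mapping := catf m1 m2.

Definition dom_disjoint (m1 m2 : mapping) : bool :=
  domf m1 `&` domf m2 == fset0.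

Inductive tv := TTrue | TFalse | TError.

Definition tv_and (a b : tv) : tv :=
  match a, b with
  | TFalse, _ | _, TFalse => TFalse
  | TTrue, TTrue => TTrue
  | _, _ => TError
  end.

Definition tv_or (a b : tv) : tv :=
  match a, b with
  | TTrue, _ | _, TTrue => TTrue
  | TFalse, TFalse => TFalse
  | _, _ => TError
  end.

Definition tv_not (a : tv) : tv :=
  match a with TTrue => TFalse | TFalse => TTrue | TError => TError end.

Inductive formula :=
  | FEqC of V & T
  | FEqV of V & V
  | FBound of V
  | FAnd of formula & formula
  | FOr of formula & formula
  | FNot of formula.

Fixpoint feval (F : formula) (m : mapping) : tv :=
  match F with
  | FEqC x c => match m.[? x] with
                | Some a => if a == c then TTrue else TFalse
                | None => TError end
  | FEqV x y => match m.[? x], m.[? y] with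
                | Some a, Some b => if a == b then TTrue else TFalse
                | _, _ => TError end
  | FBound x => if x \in domf m then TTrue else TFalse
  | FAnd F1 F2 => tv_and (feval F1 m) (feval F2 m)
  | FOr F1 F2 => tv_or (feval F1 m) (feval F2 m)
  | FNot F1 => tv_not (feval F1 m)
  end.

Definition proj (W : {fset V}) (O : mset) : mset := [seq restrictf m W | m <- O].
Definition select (F : formula) (O : mset) : mset :=
  [seq m <- O | if feval F m is TTrue then true else false].
Definition join (O1 O2 : mset) : mset :=
  flatten [seq [seq mapping_union m1 m2 | m2 <- O2 & compatible m1 m2] | m1 <- O1].
Definition munion (O1 O2 : mset) : mset := O1 ++ O2.
Definition sdiff (O1 O2 : mset) : mset :=
  [seq m1 <- O1 | all (fun m2 => ~~ compatible m1 m2) O2].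
Definition minus (O1 O2 : mset) : mset :=
  [seq m1 <- O1 | all (fun m2 => ~~ compatible m1 m2 || dom_disjoint m1 m2) O2].

Inductive expr :=
  | ELeaf of nat
  | EProj of {fset V} & expr
  | ESel of formula & expr
  | EJoin of expr & expr
  | EUnion of expr & expr
  | EDiff of expr & expr
  | EMinus of expr & expr.

Fixpoint eval (env : nat -> mset) (e : expr) : mset :=
  match e with
  | ELeaf i => env i
  | EProj W e1 => proj W (eval env e1)
  | ESel F e1 => select F (eval env e1)
  | EJoin e1 e2 => join (eval env e1) (eval env e2)
  | EUnion e1 e2 => munion (eval env e1) (eval env e2)
  | EDiff e1 e2 => sdiff (eval env e1) (eval env e2)
  | EMinus e1 e2 => minus (eval env e1) (eval env e2)
  end.

Fixpoint core (e : expr) : bool :=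
  match e with
  | ELeaf _ => true
  | EProj _ e1 | ESel _ e1 => core e1
  | EJoin e1 e2 | EUnion e1 e2 | EDiff e1 e2 => core e1 && core e2
  | EMinus _ _ => false
  end.

(* An environment respects a schema if every mapping of input i has its
   domain inside the finite variable set sch i (as for a graph pattern,
   whose solutions only bind variables occurring in it). *)
Definition respects (sch : nat -> {fset V}) (env : nat -> mset) : Prop :=
  forall i, all (fun m => domf m `<=` sch i) (env i).

End SPARQL.

(* Main.v *)
Require Import Defs.
From mathcomp Require Import all_boot.
From mathcomp Require Import finmap.

Section Proofs.
Variables (V T : choiceType).
Local Notation mapping := (mapping V T).
Local Notation mset := (mset V T).
Local Notation expr := (expr V T).

Lemma perm_flatten_map (A : eqType) (B : eqType) (f g : A -> seq B) (s : seq A) :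
  (forall x, perm_eq (f x) (g x)) -> perm_eq (flatten (map f s)) (flatten (map g s)).
Proof.
move=> H; elim: s => [|x s IH] //=; exact: perm_cat.
Qed.

Lemma join_perm (O1 O1' O2 O2' : mset) : perm_eq O1 O1' -> perm_eq O2 O2' ->
  perm_eq (join O1 O2) (join O1' O2').
Proof.
move=> h1 h2; rewrite /join.
apply: (perm_trans (perm_flatten (perm_map _ h1))).
apply: perm_flatten_map => m1.
exact: perm_map (perm_filter _ h2).
Qed.

Lemma sdiff_perm (O1 O1' O2 O2' : mset) : perm_eq O1 O1' -> perm_eq O2 O2' ->
  perm_eq (sdiff O1 O2) (sdiff O1' O2').
Proof.
move=> h1 h2; rewrite /sdiff.
apply: (perm_trans (perm_filter _ h1)).
rewrite (eq_filter (a2 := fun m1 => all (fun m2 => ~~ compatible m1 m2) O2')) //.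
move=> m1; exact: eq_all_r (perm_mem h2) _.
Qed.

Lemma minus_perm (O1 O1' O2 O2' : mset) : perm_eq O1 O1' -> perm_eq O2 O2' ->
  perm_eq (minus O1 O2) (minus O1' O2').
Proof.
move=> h1 h2; rewrite /minus.
apply: (perm_trans (perm_filter _ h1)).
rewrite (eq_filter (a2 := fun m1 => all (fun m2 => ~~ compatible m1 m2 || dom_disjoint m1 m2) O2')) //.
move=> m1; exact: eq_all_r (perm_mem h2) _.
Qed.

Fixpoint bound (sch : nat -> {fset V}) (e : expr) : {fset V} :=
  match e with
  | ELeaf i => sch i
  | EProj W _ => W
  | ESel _ e1 => bound sch e1
  | EJoin e1 e2 | EUnion e1 e2 => (bound sch e1 `|` bound sch e2)%fset
  | EDiff e1 _ | EMinus e1 _ => bound sch e1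
  end.

Lemma bound_ok sch env e : respects sch env ->
  all (fun m : mapping => (domf m `<=` bound sch e)%fset) (eval env e).
Proof.
move=> hr; elim: e => [i|W e1 IH|F e1 IH|e1 IH1 e2 IH2|e1 IH1 e2 IH2|e1 IH1 e2 IH2|e1 IH1 e2 IH2] /=.
- exact: hr.
- apply/allP => m /mapP [m' _ ->]. rewrite domf_restrict; exact: fsubsetIl.
- rewrite /select all_filter; apply/allP => m hm; apply/implyP => _; exact: (allP IH).
- apply/allP => m /flattenP [s /mapP [m1 hm1 ->]] /mapP [m2].
  rewrite mem_filter => /andP [_ hm2] ->.
  rewrite /mapping_union domf_cat; apply: fsetUSS; [exact: (allP IH1)|exact: (allP IH2)].
- rewrite /munion all_cat; apply/andP; split; apply/allP => m hm.
  + apply: fsubset_trans (allP IH1 _ hm) _; exact: fsubsetUl.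
  + apply: fsubset_trans (allP IH2 _ hm) _; exact: fsubsetUr.
- rewrite /sdiff all_filter; apply/allP => m hm; apply/implyP => _; exact: (allP IH1).
- rewrite /minus all_filter; apply/allP => m hm; apply/implyP => _; exact: (allP IH1).
Qed.

Definition step (x : V) (e2 acc : expr) : expr :=
  EUnion (EDiff (ESel (FBound T x) acc) (ESel (FBound T x) e2)) (ESel (FNot (FBound T x)) acc).

Definition px (O2 : mset) (x : V) (m1 : mapping) : bool :=
  (x \notin domf m1) || all (fun m2 : mapping => ~~ compatible m1 m2) [seq m2 <- O2 | x \in domf m2].

Lemma select_bound (x : V) (O : mset) : select (FBound T x) O = [seq m <- O | x \in domf m].
Proof. by apply: eq_filter => m /=; case: (x \in domf m). Qed.

Lemma select_nbound (x : V) (O : mset) : select (FNot (FBound T x)) O = [seq m <- O | x \notin domf m].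
Proof. by apply: eq_filter => m /=; case: (x \in domf m). Qed.

Lemma fold_ok env (xs : seq V) e1 e2 :
  perm_eq (eval env (foldr (fun x acc => step x e2 acc) e1 xs))
          [seq m <- eval env e1 | all (fun x => px (eval env e2) x m) xs].
Proof.
elim: xs => [|x xs IH] /=.
  by rewrite (eq_filter (a2 := predT)) ?filter_predT.
set A := eval env _ in IH *.
rewrite /munion /sdiff !select_bound select_nbound.
set B := eval env e2.
apply: (@perm_trans _ [seq m <- A | px B x m]).
  apply: perm_trans _ (permEl (perm_filterC (fun m : mapping => x \in domf m) [seq m <- A | px B x m])).
  rewrite -!filter_predI; apply: perm_cat; apply/permP => p; congr count; apply: eq_filter => m;
    rewrite /px /= ?inE; case: (x \in domf m) => //=; by rewrite ?andbF ?andbT.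
apply: perm_trans (perm_filter _ IH) _.
rewrite -filter_predI; apply/permP => p; congr count; apply: eq_filter => m; by rewrite /= ?inE.
Qed.

Lemma key (X : {fset V}) (O2 : mset) (m1 : mapping) :
  all (fun m : mapping => (domf m `<=` X)%fset) O2 ->
  all (fun m2 => ~~ compatible m1 m2 || dom_disjoint m1 m2) O2 =
  all (fun x => px O2 x m1) (enum_fset X).
Proof.
move=> hX; apply/allP/allP.
- move=> H x _; rewrite /px; case hx: (x \in domf m1) => //=.
  apply/allP => m2; rewrite mem_filter => /andP [hx2 hm2].
  move: (H m2 hm2); case: (compatible m1 m2) => //= /eqP hd.
  have : x \in (domf m1 `&` domf m2)%fset by rewrite inE hx hx2.
  by rewrite hd inE.
- move=> H m2 hm2; rewrite /dom_disjoint.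
  case hd: (_ == fset0); first by rewrite orbT.
  move/negbT/fset0Pn: hd => [x].
  rewrite inE => /andP [hx1 hx2].
  have hxX : x \in enum_fset X by move: (fsubsetP (allP hX _ hm2) x hx2).
  move: (H x hxX); rewrite /px hx1 /= => /allP HH; rewrite orbF; apply: HH; by rewrite mem_filter hx2.
Qed.

Theorem lemma3' (sch : nat -> {fset V}) (e : expr) :
  exists e' : expr, core e' /\
    forall env : nat -> mset, respects sch env ->
      perm_eq (eval env e) (eval env e').
Proof.
elim: e => [i|W e1 [e1' [c1 H1]]|F e1 [e1' [c1 H1]]|e1 [e1' [c1 H1]] e2 [e2' [c2 H2]]
  |e1 [e1' [c1 H1]] e2 [e2' [c2 H2]]|e1 [e1' [c1 H1]] e2 [e2' [c2 H2]]
  |e1 [e1' [c1 H1]] e2 [e2' [c2 H2]]].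
- by exists (ELeaf V T i).
- exists (EProj W e1'); split => // env hr /=; exact: perm_map (H1 env hr).
- exists (ESel F e1'); split => // env hr /=; exact: perm_filter (H1 env hr).
- exists (EJoin e1' e2'); split => /=; first by rewrite c1 c2.
  move=> env hr; exact: join_perm (H1 env hr) (H2 env hr).
- exists (EUnion e1' e2'); split => /=; first by rewrite c1 c2.
  move=> env hr; exact: perm_cat (H1 env hr) (H2 env hr).
- exists (EDiff e1' e2'); split => /=; first by rewrite c1 c2.
  move=> env hr; exact: sdiff_perm (H1 env hr) (H2 env hr).
- exists (foldr (fun x acc => step x e2' acc) e1' (enum_fset (bound sch e2))); split.
    by elim: (enum_fset _) => //= x xs ->; rewrite c2.
  move=> env hr.
  have E1 := @minus_perm _ _ _ _ (H1 env hr) (H2 env hr).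
  have E2 := fold_ok env (enum_fset (bound sch e2)) e1' e2'.
  rewrite [eval env (EMinus _ _)]/=.
  apply: (perm_trans E1); rewrite perm_sym; apply: (perm_trans E2).
  rewrite /minus; apply/permP => p; congr count; apply: eq_filter => m1.
  symmetry; apply: key.
  have hb := @bound_ok sch env e2 hr.
  apply/allP => m hm; apply: (allP hb); by rewrite (perm_mem (H2 env hr)).
Qed.

End Proofs.

Theorem lemma3 (V T : choiceType)
    (infV : forall s : seq V, exists x : V, x \notin s)
    (infT : forall s : seq T, exists c : T, c \notin s)
    (sch : nat -> {fset V}) (e : expr V T) :
  exists e' : expr V T, core e' /\
    forall env : nat -> mset V T, respects sch env ->
      perm_eq (eval env e) (eval env e').
Proof. exact: lemma3'. Qed.
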